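(* Let $\mathbb{X}$ be a linearly ordered radicable idempotent semifield, $n\ge1$, $\bm{A}\in\mathbb{X}^{n\times n}$ with spectral radius $\lambda=\bigoplus_{k=1}^{n}(\mathrm{tr}\,\bm{A}^{k})^{1/k}$, $\bm{p},\bm{g}\in\mathbb{X}^n$, $\bm{q},\bm{h}\in\mathbb{X}^n$ regular vectors, and $r\in\mathbb{X}$, such that $\bm{h}^{-}\bm{g}\le\mathbb{1}$ and $\lambda\oplus(\bm{q}^{-}\bm{p})^{1/2}\oplus r>\mathbb{0}$. Consider minimizing $\bm{x}^{-}\bm{A}\bm{x}\oplus\bm{x}^{-}\bm{p}\oplus\bm{q}^{-}\bm{x}\oplus r$ over regular $\bm{x}\in\mathbb{X}^n$ subject to $\bm{g}\le\bm{x}\le\bm{h}$. Then the minimum value is $$\theta=\lambda\oplus\bigoplus_{k=1}^{n-1}(\bm{h}^{-}\bm{A}^{k}\bm{g})^{1/k}\oplus\bigoplus_{k=0}^{n-1}(\bm{q}^{-}\bm{A}^{k}\bm{g}\oplus\bm{h}^{-}\bm{A}^{k}\bm{p})^{1/(k+1)}\oplus\bigoplus_{k=0}^{n-1}(\bm{q}^{-}\bm{A}^{k}\bm{p})^{1/(k+2)}\oplus r,$$ and all regular solutions are exactly the vectors $\bm{x}=(\theta^{-1}\bm{A})^{\ast}\bm{u}$ with $\bm{u}$ any vector satisfying $\theta^{-1}\bm{p}\oplus\bm{g}\le\bm{u}\le\big((\theta^{-1}\bm{q}^{-}\oplus\bm{h}^{-})(\theta^{-1}\bm{A})^{\ast}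\big)^{-}$.
   Context: An idempotent semifield is $(\mathbb{X},\oplus,\otimes,\mathbb{0},\mathbb{1})$ where $(\mathbb{X},\oplus,\mathbb{0})$ is a commutative monoid with idempotent addition, $(\mathbb{X}\setminus\{\mathbb{0}\},\otimes,\mathbb{1})$ is an abelian group, and $\otimes$ distributes over $\oplus$; the product sign is omitted. The order is $x\le y$ iff $x\oplus y=y$, assumed linear; ''minimum'' refers to this order. Radicable means $x^m=a$ is solvable for all $a$ and integers $m\ge1$, so rational powers are defined. Matrix/vector operations use $\oplus,\otimes$; inequalities are entrywise. $\bm{I}$ is the identity matrix, $\bm{A}^0=\bm{I}$. A vector is regular if all entries are nonzero. For a nonzero vector $\bm{x}$, $\bm{x}^{-}$ is the transposed vector with entries $x_i^{-1}$ if $x_i\ne\mathbb{0}$ and $\mathbb{0}$ otherwise. $\mathrm{tr}\,\bm{A}=a_{11}\oplus\cdots\oplus a_{nn}$; $\bm{A}^{\ast}=\bm{I}\oplus\bm{A}\oplus\cdots\oplus\bm{A}^{n-1}$. *)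

(* Defs.v *)
From mathcomp Require Import all_boot.
From Stdlib Require Import ClassicalEpsilon.

Set Implicit Arguments.
Unset Strict Implicit.
Unset Printing Implicit Defensive.

Record isemifield := ISemifield {
  car :> eqType;
  szero : car;
  sone : car;
  sadd : car -> car -> car;
  smul : car -> car -> car;
  sinv : car -> car;   (* multiplicative inverse; its value at szero is irrelevant *)
  addA : forall x y z, sadd x (sadd y z) = sadd (sadd x y) z;
  addC : forall x y, sadd x y = sadd y x;
  add0x : forall x, sadd szero x = x;
  addxx : forall x, sadd x x = x;
  mulA : forall x y z, smul x (smul y z) = smul (smul x y) z;
  mulC : forall x y, smul x y = smul y x;
  mul1x : forall x, smul sone x = x;
  mul0x : forall x, smul szero x = szero;
  mulVx : forall x, x != szero -> smul (sinv x) x = sone;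
  one_neq0 : sone != szero;
  mulDr : forall x y z, smul x (sadd y z) = sadd (smul x y) (smul x z);
  (* the order x <= y iff x (+) y = y is linear *)
  add_linear : forall x y, sadd x y = x \/ sadd x y = y;
  radicable : forall (a : car) (m : nat), (0 < m)%N ->
      exists x : car, iter m (smul x) sone = a
}.

Arguments szero {i}.
Arguments sone {i}.
Arguments sadd {i}.
Arguments smul {i}.
Arguments sinv {i}.

Section Ops.
Variable X : isemifield.

Definition sle (x y : X) : Prop := sadd x y = y.

Definition spow (x : X) (m : nat) : X := iter m (smul x) sone.
Definition sroot (m : nat) (a : X) : X :=
  epsilon (inhabits a) (fun x : X => spow x m = a).

Definition vec (n : nat) := 'I_n -> X.
Definition mat (n : nat) := 'I_n -> 'I_n -> X.

Definition vle n (u v : vec n) : Prop := forall i, sle (u i) (v i).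
Definition vadd n (u v : vec n) : vec n := fun i => sadd (u i) (v i).
Definition vscale n (a : X) (u : vec n) : vec n := fun i => smul a (u i).
Definition regular n (x : vec n) : Prop := forall i, x i != szero.

(* x^- : entries x_i^{-1} if x_i <> 0 and 0 otherwise (row <-> column) *)
Definition conj n (x : vec n) : vec n :=
  fun i => if x i == szero then szero else sinv (x i).

Definition dot n (u v : vec n) : X := \big[sadd/szero]_(i < n) smul (u i) (v i).

Definition mmul n (A B : mat n) : mat n :=
  fun i j => \big[sadd/szero]_(k < n) smul (A i k) (B k j).
Definition madd n (A B : mat n) : mat n := fun i j => sadd (A i j) (B i j).
Definition mscale n (a : X) (A : mat n) : mat n := fun i j => smul a (A i j).
Definition mid n : mat n := fun i j => if i == j then sone else szero.
Definition mpow n (A : mat n) (k : nat) : mat n := iter k (mmul A) (@mid n).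
Definition mvec n (A : mat n) (v : vec n) : vec n :=
  fun i => \big[sadd/szero]_(j < n) smul (A i j) (v j).
Definition vecm n (u : vec n) (A : mat n) : vec n :=
  fun j => \big[sadd/szero]_(i < n) smul (u i) (A i j).
Definition mtr n (A : mat n) : X := \big[sadd/szero]_(i < n) A i i.

Definition mstar n (A : mat n) : mat n :=
  fun i j => \big[sadd/szero]_(k < n) mpow A k i j.

Definition specrad n (A : mat n) : X :=
  \big[sadd/szero]_(1 <= k < n.+1) sroot k (mtr (mpow A k)).

End Ops.

(* Main.v *)
Require Import Defs.
From mathcomp Require Import all_boot.
From mathcomp Require Import zify.
From Stdlib Require Import ClassicalEpsilon Classical FunctionalExtensionality.

Set Implicit Arguments.
Unset Strict Implicit.
Unset Printing Implicit Defensive.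

Section Basic.
Variable X : isemifield.
Local Notation "x '⊕' y" := (@sadd X x y) (at level 50, left associativity).
Local Notation "x '⊗' y" := (@smul X x y) (at level 40, left associativity).
Local Notation "x '≼' y" := (@sle X x y) (at level 70).
Local Notation "0" := (@szero X).
Local Notation "1" := (@sone X).

Lemma addx0 (x : X) : x ⊕ 0 = x. Proof. by rewrite addC add0x. Qed.
Lemma mulx1 (x : X) : x ⊗ 1 = x. Proof. by rewrite mulC mul1x. Qed.
Lemma mulx0 (x : X) : x ⊗ 0 = 0. Proof. by rewrite mulC mul0x. Qed.
Lemma mulDl (x y z : X) : (x ⊕ y) ⊗ z = x ⊗ z ⊕ y ⊗ z.
Proof. by rewrite mulC mulDr !(mulC z). Qed.
Lemma mulxV (x : X) : x != 0 -> x ⊗ sinv x = 1.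
Proof. by move=> H; rewrite mulC mulVx. Qed.

Lemma le_refl (x : X) : x ≼ x. Proof. exact: addxx. Qed.
Lemma le_trans (x y z : X) : x ≼ y -> y ≼ z -> x ≼ z.
Proof. rewrite /sle => H1 H2. by rewrite -H2 addA H1. Qed.
Lemma le_anti (x y : X) : x ≼ y -> y ≼ x -> x = y.
Proof. rewrite /sle => H1 H2. by rewrite -H1 addC H2. Qed.
Lemma le_total (x y : X) : x ≼ y \/ y ≼ x.
Proof. rewrite /sle; case: (add_linear x y) => H; [right|left] => //. by rewrite addC. Qed.
Lemma le0x (x : X) : 0 ≼ x. Proof. exact: add0x. Qed.
Lemma le_addl (x y : X) : x ≼ x ⊕ y. Proof. by rewrite /sle addA addxx. Qed.
Lemma le_addr (x y : X) : y ≼ x ⊕ y. Proof. by rewrite addC; apply: le_addl. Qed.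
Lemma add_le (x y z : X) : x ≼ z -> y ≼ z -> x ⊕ y ≼ z.
Proof. rewrite /sle => H1 H2. by rewrite -addA H2 H1. Qed.
Lemma add_leP (x y z : X) : x ⊕ y ≼ z <-> x ≼ z /\ y ≼ z.
Proof.
split; last by case; apply: add_le.
move=> H; split; apply: le_trans H; [apply: le_addl|apply: le_addr].
Qed.
Lemma le_add2 (x y x' y' : X) : x ≼ x' -> y ≼ y' -> x ⊕ y ≼ x' ⊕ y'.
Proof. move=> H1 H2; apply: add_le; [apply: le_trans H1 (le_addl _ _)| apply: le_trans H2 (le_addr _ _)]. Qed.
Lemma le_mul2l (c x y : X) : x ≼ y -> c ⊗ x ≼ c ⊗ y.
Proof. rewrite /sle => H. by rewrite -mulDr H. Qed.
Lemma le_mul2r (c x y : X) : x ≼ y -> x ⊗ c ≼ y ⊗ c.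
Proof. by rewrite !(mulC _ c); apply: le_mul2l. Qed.
Lemma le_mul2 (x y x' y' : X) : x ≼ x' -> y ≼ y' -> x ⊗ y ≼ x' ⊗ y'.
Proof. move=> H1 H2; apply: le_trans (le_mul2l _ H2) _; exact: le_mul2r. Qed.
Lemma le0 (x : X) : x ≼ 0 -> x = 0.
Proof. move=> H; apply: le_anti H (le0x _). Qed.

Lemma inv_neq0 (x : X) : x != 0 -> sinv x != 0.
Proof.
move=> H; apply/negP => /eqP E; move: (mulVx H); rewrite E mul0x => E2.
by move: (@one_neq0 X); rewrite -E2 eqxx.
Qed.
Lemma mul_neq0 (x y : X) : x != 0 -> y != 0 -> x ⊗ y != 0.
Proof.
move=> Hx Hy; apply/negP => /eqP E.
have : sinv x ⊗ (x ⊗ y) = y by rewrite mulA mulVx // mul1x.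
rewrite E mulx0 => E2; subst y; by rewrite eqxx in Hy.
Qed.
Lemma mulK (a x : X) : a != 0 -> sinv a ⊗ (a ⊗ x) = x.
Proof. by move=> H; rewrite mulA mulVx // mul1x. Qed.
Lemma le_mul2l_can (a x y : X) : a != 0 -> (a ⊗ x ≼ a ⊗ y <-> x ≼ y).
Proof.
move=> H; split; last exact: le_mul2l.
move=> /(le_mul2l (sinv a)). by rewrite !mulK.
Qed.
Lemma invl_le (a c t : X) : a != 0 -> (sinv a ⊗ c ≼ t <-> c ≼ t ⊗ a).
Proof.
move=> H. rewrite -(le_mul2l_can _ _ H) mulA mulxV // mul1x (mulC t). done.
Qed.
Lemma le_neq0 (x y : X) : x ≼ y -> x != 0 -> y != 0.
Proof. move=> H Hx; apply/negP => /eqP E; move: H; rewrite E => /le0 E2; by rewrite E2 eqxx in Hx. Qed.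

Lemma le_big (I : eqType) (r : seq I) (P : pred I) (F : I -> X) (i : I) :
  i \in r -> P i -> F i ≼ \big[sadd/szero]_(j <- r | P j) F j.
Proof.
elim: r => //= a r IH; rewrite in_cons => /orP [/eqP <-|Hi] HP; rewrite big_cons.
  by rewrite HP; apply: le_addl.
case: (P a); last exact: IH. apply: le_trans (IH Hi HP) (le_addr _ _).
Qed.
Lemma big_le (I : eqType) (r : seq I) (P : pred I) (F : I -> X) (c : X) :
  (forall i, i \in r -> P i -> F i ≼ c) -> \big[sadd/szero]_(j <- r | P j) F j ≼ c.
Proof.
elim: r => [|a r IH] H; first by rewrite big_nil; apply: le0x.
rewrite big_cons. have H2 : \big[sadd/szero]_(j <- r | P j) F j ≼ c.
  by apply: IH => i Hi; apply: H; rewrite in_cons Hi orbT.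
case E: (P a) => //. apply: add_le => //. apply: H => //; by rewrite in_cons eqxx.
Qed.
Lemma mul_big (I : eqType) (r : seq I) (P : pred I) (F : I -> X) (c : X) :
  c ⊗ \big[sadd/szero]_(j <- r | P j) F j = \big[sadd/szero]_(j <- r | P j) (c ⊗ F j).
Proof.
elim: r => [|a r IH]; first by rewrite !big_nil mulx0.
rewrite !big_cons; case: (P a) => //. by rewrite mulDr IH.
Qed.
Lemma big_mulr (I : eqType) (r : seq I) (P : pred I) (F : I -> X) (c : X) :
  (\big[sadd/szero]_(j <- r | P j) F j) ⊗ c = \big[sadd/szero]_(j <- r | P j) (F j ⊗ c).
Proof. rewrite mulC mul_big; apply: eq_bigr => i _; exact: mulC. Qed.
Lemma big_attain (I : eqType) (r : seq I) (P : pred I) (F : I -> X) :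
  \big[sadd/szero]_(j <- r | P j) F j = 0 \/
  exists i, \big[sadd/szero]_(j <- r | P j) F j = F i.
Proof.
elim: r => [|a r IH]; first by left; rewrite big_nil.
rewrite big_cons; case: (P a) => //.
case: (add_linear (F a) (\big[sadd/szero]_(j <- r | P j) F j)) => ->.
  by right; exists a.
done.
Qed.
Lemma le_bigI n (F : 'I_n -> X) i : F i ≼ \big[sadd/szero]_(j < n) F j.
Proof. by apply: le_big; rewrite ?mem_index_enum. Qed.
Lemma bigI_le n (F : 'I_n -> X) c : (forall i, F i ≼ c) -> \big[sadd/szero]_(j < n) F j ≼ c.
Proof. move=> H; apply: big_le => i _ _; exact: H. Qed.
Lemma le_bigI2 n (F G : 'I_n -> X) : (forall i, F i ≼ G i) ->
  \big[sadd/szero]_(j < n) F j ≼ \big[sadd/szero]_(j < n) G j.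
Proof. move=> H; apply: bigI_le => i; apply: le_trans (H i) (le_bigI _ _). Qed.

Lemma spowS (x : X) k : spow x k.+1 = x ⊗ spow x k. Proof. by []. Qed.
Lemma spow_le (x y : X) k : x ≼ y -> spow x k ≼ spow y k.
Proof. move=> H; elim: k => [|k IH]; first exact: le_refl. rewrite !spowS; exact: le_mul2. Qed.
Lemma spow_mul (x y : X) k : spow (x ⊗ y) k = spow x k ⊗ spow y k.
Proof.
elim: k => [|k IH]; first by rewrite /= mul1x.
rewrite !spowS IH. rewrite -!mulA; congr (_ ⊗ _). by rewrite mulA (mulC y) -mulA.
Qed.
Lemma spow1 k : spow (1 : X) k = 1.
Proof. elim: k => // k IH; by rewrite spowS IH mul1x. Qed.
Lemma spow_neq0 (x : X) k : x != 0 -> spow x k != 0.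
Proof. move=> H; elim: k => [|k IH]; first exact: one_neq0. rewrite spowS; exact: mul_neq0. Qed.
Lemma spow0 k : (0 < k)%N -> spow (0 : X) k = 0.
Proof. by case: k => // k _; rewrite spowS mul0x. Qed.
Lemma spow_inv (x : X) k : x != 0 -> spow (sinv x) k ⊗ spow x k = 1.
Proof. move=> H; by rewrite -spow_mul mulVx // spow1. Qed.
Lemma spow_add (x : X) a b : spow x (a + b) = spow x a ⊗ spow x b.
Proof. elim: a => [|a IH]; first by rewrite add0n /= mul1x. by rewrite addSn !spowS IH mulA. Qed.
Lemma srootP k (a : X) : (0 < k)%N -> spow (sroot k a) k = a.
Proof.
move=> Hk; rewrite /sroot.
apply: (@epsilon_spec X (inhabits a) (fun x => spow x k = a)).
case: (radicable a Hk) => x Hx; by exists x.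
Qed.
Lemma le_spow (c : X) k : 1 ≼ c -> (0 < k)%N -> c ≼ spow c k.
Proof.
move=> H; case: k => // k _. rewrite spowS -{1}(mulx1 c); apply: le_mul2l.
rewrite -(spow1 k); exact: spow_le.
Qed.
Lemma spow_strict (x y : X) k : (0 < k)%N -> x ≼ y -> spow x k = spow y k -> x = y.
Proof.
move=> Hk Hxy E.
case: (eqVneq x 0) => Hx.
  subst x; rewrite spow0 // in E. case: (eqVneq y 0) => Hy; first by rewrite Hy.
  by move: (spow_neq0 k Hy); rewrite -E eqxx.
set c := sinv x ⊗ y.
have Hc : y = x ⊗ c by rewrite /c mulA mulxV // mul1x.
have H1c : 1 ≼ c.
  by rewrite -(le_mul2l_can _ _ Hx) mulx1 -Hc.
have Hck : spow c k = 1.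
  move: E; rewrite Hc spow_mul -{1}(mulx1 (spow x k)) => E.
  have := f_equal (smul (sinv (spow x k))) E. rewrite !mulK ?spow_neq0 //.
have Hc1 : c ≼ 1.
  rewrite -Hck; exact: le_spow.
by rewrite Hc (le_anti Hc1 H1c) mulx1.
Qed.
Lemma sroot_le k (a t : X) : (0 < k)%N -> a ≼ spow t k -> sroot k a ≼ t.
Proof.
move=> Hk H. case: (le_total (sroot k a) t) => // H2.
have E : spow t k = spow (sroot k a) k.
  apply: le_anti; first exact: spow_le. by rewrite srootP.
by rewrite (spow_strict Hk H2 E); apply: le_refl.
Qed.
Lemma le_sroot k (a t : X) : (0 < k)%N -> sroot k a ≼ t -> a ≼ spow t k.
Proof. move=> Hk H; rewrite -(srootP a Hk); exact: spow_le. Qed.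
End Basic.

Section Walk.
Variable X : isemifield.
Local Notation "x '⊕' y" := (@sadd X x y) (at level 50, left associativity).
Local Notation "x '⊗' y" := (@smul X x y) (at level 40, left associativity).
Local Notation "x '≼' y" := (@sle X x y) (at level 70).
Variable n : nat.
Variable C : mat X n.

Lemma mpowS (A : mat X n) k : mpow A k.+1 = mmul A (mpow A k). Proof. by []. Qed.

Fixpoint wt (f : nat -> 'I_n) (L : nat) : X :=
  if L is L'.+1 then C (f 0%N) (f 1%N) ⊗ wt (fun t => f t.+1) L' else sone.

Lemma wt_ext f g L : (forall t, (t <= L)%N -> f t = g t) -> wt f L = wt g L.
Proof.
elim: L f g => [//|L IH] f g H /=.
rewrite (H 0%N) // (H 1%N) //; congr (_ ⊗ _). apply: IH => t Ht; apply: H. by [].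
Qed.

Lemma wt_split f a L : wt f (a + L) = wt f a ⊗ wt (fun t => f (a + t)%N) L.
Proof.
elim: a f => [|a IH] f.
  rewrite /= mul1x; apply: wt_ext => t _; by rewrite add0n.
rewrite addSn /= IH -mulA. done.
Qed.

Lemma wt_le_pow f L : wt f L ≼ mpow C L (f 0%N) (f L).
Proof.
elim: L f => [|L IH] f /=.
  rewrite /mid eqxx; exact: le_refl.
rewrite /mmul. apply: le_trans (le_bigI _ (f 1%N)). apply: le_mul2l. exact: (IH (fun t => f t.+1)).
Qed.

Lemma pow_attain L i j : mpow C L i j = szero \/
  exists f, [/\ f 0%N = i, f L = j & mpow C L i j = wt f L].
Proof.
elim: L i j => [|L IH] i j.
  rewrite /= /mid; case: (eqVneq i j) => [<-|_]; last by left.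
  right; exists (fun _ => i); split => //.
rewrite mpowS /mmul. case: (big_attain (index_enum 'I_n) (fun _ => true) (fun k => C i k ⊗ mpow C L k j)) => [->|[k ->]]; first by left.
case: (IH k j) => [->|[f [H0 HL HE]]]; first by left; rewrite mulx0.
right; exists (fun t => if t is t'.+1 then f t' else i); split => //.
by rewrite HE /= H0.
Qed.

Lemma pigeon (f : nat -> 'I_n) : exists a b, [/\ (a < b)%N, (b <= n)%N & f a = f b].
Proof.
pose g := fun k : 'I_n.+1 => f (nat_of_ord k).
have Hg : ~ injective g.
  move=> /leq_card; rewrite !card_ord; by rewrite ltnn.
apply: NNPP => Hn; apply: Hg => x y E; apply: val_inj; apply: NNPP => Hxy.
apply: Hn. case: (ltngtP x y) => Hl.
- exists x, y; split => //; by rewrite -ltnS.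
- exists y, x; split => //; by rewrite -ltnS.
- by case: Hxy.
Qed.

Hypothesis Htr : forall k, (0 < k)%N -> (k <= n)%N -> mtr (mpow C k) ≼ sone.

Lemma walk m f : wt f m ≼ mstar C (f 0%N) (f m).
Proof.
elim/ltn_ind: m f => m IH f.
case: (ltnP m n) => Hmn.
  apply: le_trans (wt_le_pow f m) _. rewrite /mstar.
  exact: (le_bigI (fun k : 'I_n => mpow C k (f 0%N) (f m)) (Ordinal Hmn)).
case: (pigeon f) => a [b [Hab Hbn Efab]].
set L := (b - a)%N.
have HL : (0 < L)%N by rewrite /L subn_gt0.
have Em : m = (a + (L + (m - b)))%N by rewrite /L; lia.
have Hcyc : wt (fun t => f (a + t)%N) L ≼ sone.
  apply: le_trans (wt_le_pow _ _) _. rewrite addn0.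
  have -> : (a + L)%N = b by rewrite /L; lia.
  rewrite -Efab. apply: le_trans (Htr HL _); last by rewrite /L; lia.
  rewrite /mtr. exact: (le_bigI (fun i => mpow C L i i) (f a)).
pose f' := fun t => if (t < a)%N then f t else f (t + L)%N.
have E1 : wt f m ≼ wt f' (a + (m - b)).
  rewrite {1}Em wt_split wt_split mulA wt_split.
  have -> : wt f' a = wt f a.
    apply: wt_ext => t Ht; rewrite /f'. case: ltnP => // Hta.
    have -> : t = a by apply/eqP; rewrite eqn_leq Ht Hta.
    have -> : (a + L)%N = b by rewrite /L; lia. by rewrite Efab.
  have -> : wt (fun t => f' (a + t)%N) (m - b) = wt (fun t => f ((a + L) + t)%N) (m - b).
    apply: wt_ext => t _; rewrite /f'. rewrite ltnNge leq_addr /=. congr f; lia.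
  have -> : wt (fun t => f (a + (L + t))%N) (m - b) = wt (fun t => f ((a + L) + t)%N) (m - b).
    by apply: wt_ext => t _; rewrite addnA.
  rewrite -mulA; apply: le_mul2l. apply: le_trans (le_mul2r _ Hcyc) _. rewrite mul1x; exact: le_refl.
apply: le_trans E1 _. apply: le_trans (IH _ _ f') _; first by rewrite /L; lia.
have -> : f' 0%N = f 0%N.
  rewrite /f'; case: ifP => // Ha. have a0 : a = 0%N by move/negbT: Ha; rewrite -leqNgt leqn0 => /eqP.
  rewrite add0n. have -> : L = b by rewrite /L a0 subn0. by rewrite -Efab a0.
have -> : f' (a + (m - b))%N = f m.
  rewrite /f' ltnNge leq_addr /=. congr f; rewrite /L; lia.
exact: le_refl.
Qed.

Lemma mpow_le_star k i j : mpow C k i j ≼ mstar C i j.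
Proof.
case: (pow_attain k i j) => [->|[f [<- <- ->]]]; first exact: le0x.
exact: walk.
Qed.
End Walk.

Section Mat.
Variable X : isemifield.
Local Notation "x '⊕' y" := (@sadd X x y) (at level 50, left associativity).
Local Notation "x '⊗' y" := (@smul X x y) (at level 40, left associativity).
Local Notation "x '≼' y" := (@sle X x y) (at level 70).
Variable n : nat.

Lemma mulCA (x y z : X) : x ⊗ (y ⊗ z) = y ⊗ (x ⊗ z).
Proof. by rewrite !mulA (mulC x). Qed.
Lemma mulAC (x y z : X) : x ⊗ y ⊗ z = x ⊗ z ⊗ y.
Proof. by rewrite -!mulA (mulC y). Qed.

Lemma conjE (v : vec X n) i : v i != szero -> conj v i = sinv (v i).
Proof. by move=> H; rewrite /conj (negbTE H). Qed.

Lemma dot_leP (u v : vec X n) t : dot u v ≼ t <-> forall i, u i ⊗ v i ≼ t.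
Proof.
split; last exact: bigI_le.
move=> H i; apply: le_trans H; exact: (le_bigI (fun i => u i ⊗ v i)).
Qed.
Lemma dot_term (u v : vec X n) i : u i ⊗ v i ≼ dot u v.
Proof. exact: (le_bigI (fun i => u i ⊗ v i)). Qed.

Lemma mvec_term (M : mat X n) v i j : M i j ⊗ v j ≼ mvec M v i.
Proof. exact: (le_bigI (fun j => M i j ⊗ v j)). Qed.
Lemma mvec_le (M : mat X n) (v w : vec X n) i :
  (forall j, v j ≼ w j) -> mvec M v i ≼ mvec M w i.
Proof. move=> H; apply: le_bigI2 => j; exact: le_mul2l. Qed.
Lemma mvec_scale (M : mat X n) c v i : mvec M (vscale c v) i = c ⊗ mvec M v i.
Proof. rewrite /mvec mul_big; apply: eq_bigr => j _; by rewrite /vscale mulCA. Qed.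
Lemma mvec_mscale (M : mat X n) c v i : mvec (mscale c M) v i = c ⊗ mvec M v i.
Proof. rewrite /mvec mul_big; apply: eq_bigr => j _; by rewrite /mscale mulA. Qed.
Lemma mvec_mid (v : vec X n) i : mvec (@mid X n) v i = v i.
Proof.
apply: le_anti.
  apply: bigI_le => j; rewrite /mid; case: (eqVneq i j) => [->|_].
    rewrite mul1x; exact: le_refl.
  rewrite mul0x; exact: le0x.
apply: le_trans (mvec_term _ _ i i); rewrite /mid eqxx mul1x; exact: le_refl.
Qed.
Lemma mpow_scale (A : mat X n) c k i j : mpow (mscale c A) k i j = spow c k ⊗ mpow A k i j.
Proof.
elim: k i j => [|k IH] i j; first by rewrite /= mul1x.
rewrite !mpowS /mmul mul_big; apply: eq_bigr => l _.
rewrite IH /mscale. rewrite -!mulA; congr (_ ⊗ _). by rewrite mulCA.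
Qed.

Lemma mvec_pow_le (A : mat X n) (x : vec X n) t k i :
  (forall i, mvec A x i ≼ t ⊗ x i) -> mvec (mpow A k) x i ≼ spow t k ⊗ x i.
Proof.
move=> H; elim: k i => [|k IH] i.
  rewrite /= mvec_mid mul1x; exact: le_refl.
rewrite mpowS; apply: bigI_le => j. rewrite /mmul big_mulr; apply: bigI_le => l.
rewrite -mulA. apply: le_trans (le_mul2l _ (le_trans (mvec_term _ _ l j) (IH l))) _.
rewrite mulCA spowS (mulC t) -mulA. apply: le_mul2l. exact: le_trans (mvec_term _ _ i l) (H i).
Qed.

Lemma le_inv_iff (a c : X) : a != szero -> (c ≼ sinv a <-> a ⊗ c ≼ sone).
Proof. move=> H; by rewrite -(le_mul2l_can c (sinv a) H) mulxV. Qed.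
End Mat.

Theorem corollary1 (X : isemifield) (n : nat) (Hn : (1 <= n)%N)
  (A : mat X n) (p g q h : vec X n) (r : X)
  (Hq : regular q) (Hh : regular h)
  (Hhg : sle (dot (conj h) g) sone)
  (Hpos : sadd (sadd (specrad A) (sroot 2 (dot (conj q) p))) r != szero) :
  let lam := specrad A in
  let F := fun x : vec X n =>
    sadd (sadd (sadd (dot (conj x) (mvec A x)) (dot (conj x) p)) (dot (conj q) x)) r in
  let theta :=
    sadd (sadd (sadd (sadd lam
      (\big[sadd/szero]_(1 <= k < n) sroot k (dot (conj h) (mvec (mpow A k) g))))
      (\big[sadd/szero]_(0 <= k < n)
          sroot k.+1 (sadd (dot (conj q) (mvec (mpow A k) g))
                          (dot (conj h) (mvec (mpow A k) p)))))
      (\big[sadd/szero]_(0 <= k < n) sroot k.+2 (dot (conj q) (mvec (mpow A k) p))))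
      r in
  let B := mstar (mscale (sinv theta) A) in
  let ub := conj (vecm (vadd (vscale (sinv theta) (conj q)) (conj h)) B) in
  (* theta is the minimum value *)
  (forall x : vec X n, regular x -> vle g x -> vle x h -> sle theta (F x)) /\
  (exists x : vec X n, [/\ regular x, vle g x, vle x h & F x = theta]) /\
  (* characterization of all regular solutions *)
  (forall x : vec X n, regular x ->
     ((vle g x /\ vle x h /\ F x = theta) <->
      exists u : vec X n,
        [/\ vle (vadd (vscale (sinv theta) p) g) u, vle u ub & x = mvec B u])).
Proof.
move=> lam F theta B ub.
have cq i : conj q i = sinv (q i) by apply: conjE.
have ch i : conj h i = sinv (h i) by apply: conjE.
have Fle : forall x t, regular x -> (sle (F x) t <->
   [/\ (forall i, sle (mvec A x i) (smul t (x i))), (forall i, sle (p i) (smul t (x i))),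
       (forall i, sle (smul (sinv (q i)) (x i)) t) & sle r t]).
  move=> x t Hx; rewrite /F !add_leP !dot_leP.
  have cx i : conj x i = sinv (x i) by apply: conjE.
  split.
    case=> [[[H1 H2] H3] H4]; split => // i.
    - by rewrite -invl_le // -cx.
    - by rewrite -invl_le // -cx.
    - by rewrite -cq.
  case=> H1 H2 H3 H4; split => //; split; [split|] => i.
  - by rewrite cx invl_le.
  - by rewrite cx invl_le.
  - by rewrite cq.
have lower : forall x t, regular x -> vle g x -> vle x h ->
   (forall i, sle (mvec A x i) (smul t (x i))) -> (forall i, sle (p i) (smul t (x i))) ->
   (forall i, sle (smul (sinv (q i)) (x i)) t) -> sle r t -> sle theta t.
  move=> x t Hx Hgx Hxh H1 H2 H3 H4.
  have Hk k i : sle (mvec (mpow A k) x i) (smul (spow t k) (x i)) by apply: mvec_pow_le.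
  have Hgk k i : sle (mvec (mpow A k) g i) (smul (spow t k) (x i)).
    apply: le_trans (Hk k i); exact: mvec_le.
  have Hpk k i : sle (mvec (mpow A k) p i) (smul t (smul (spow t k) (x i))).
    apply: le_trans (mvec_le _ _ (w := vscale t x) H2) _. rewrite mvec_scale. exact: le_mul2l.
  have hx c i : sle (smul (sinv (h i)) (smul c (x i))) c.
    rewrite mulCA -{2}(mulx1 c); apply: le_mul2l. rewrite invl_le // mul1x. exact: Hxh.
  have qx c i : sle (smul (sinv (q i)) (smul c (x i))) (smul c t).
    rewrite mulCA; apply: le_mul2l; exact: H3.
  rewrite /theta /lam /specrad; repeat apply: add_le => //; apply: big_le => k; rewrite mem_index_iota => /andP [Hk1 Hk2] _.
  - apply: sroot_le => //. apply: bigI_le => i.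
    rewrite -(le_mul2l_can _ _ (Hx i)) !(mulC (x i)). apply: le_trans (Hk k i).
    exact: mvec_term.
  - apply: sroot_le => //. apply/dot_leP => i. rewrite ch.
    apply: le_trans (le_mul2l _ (Hgk k i)) _. exact: hx.
  - apply: sroot_le => //. apply: add_le; apply/dot_leP => i.
      rewrite cq. apply: le_trans (le_mul2l _ (Hgk k i)) _. rewrite spowS (mulC t). exact: qx.
    rewrite ch. apply: le_trans (le_mul2l _ (Hpk k i)) _. rewrite [smul t (smul _ (x i))]mulA spowS. exact: hx.
  - apply: sroot_le => //. apply/dot_leP => i.
    rewrite cq. apply: le_trans (le_mul2l _ (Hpk k i)) _. rewrite [smul t (smul _ (x i))]mulA. apply: le_trans (qx _ i) _. rewrite !spowS mulC. exact: le_refl.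
have Part1 : forall x, regular x -> vle g x -> vle x h -> sle theta (F x).
  move=> x Hx Hgx Hxh. case: (proj1 (Fle x (F x) Hx) (le_refl _)) => H1 H2 H3 H4.
  exact: (lower x _ Hx Hgx Hxh H1 H2 H3 H4).
have Tlam : sle lam theta.
  rewrite /theta; apply: le_trans _ (le_addl _ r). apply: le_trans _ (le_addl _ _).
  apply: le_trans _ (le_addl _ _). exact: le_addl.
have TS1 : sle (\big[sadd/szero]_(1 <= k < n) sroot k (dot (conj h) (mvec (mpow A k) g))) theta.
  rewrite /theta; apply: le_trans _ (le_addl _ r). apply: le_trans _ (le_addl _ _).
  apply: le_trans _ (le_addl _ _). exact: le_addr.
have TS2 : sle (\big[sadd/szero]_(0 <= k < n) sroot k.+1 (sadd (dot (conj q) (mvec (mpow A k) g)) (dot (conj h) (mvec (mpow A k) p)))) theta.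
  rewrite /theta; apply: le_trans _ (le_addl _ r). apply: le_trans _ (le_addl _ _). exact: le_addr.
have TS3 : sle (\big[sadd/szero]_(0 <= k < n) sroot k.+2 (dot (conj q) (mvec (mpow A k) p))) theta.
  rewrite /theta; apply: le_trans _ (le_addl _ r). exact: le_addr.
have Tr : sle r theta by exact: le_addr.
have mid_g : mvec (mpow A 0) g = g by apply: functional_extensionality => i; exact: mvec_mid.
have mid_p : mvec (mpow A 0) p = p by apply: functional_extensionality => i; exact: mvec_mid.
have Htheta : theta != szero.
  apply: le_neq0 Hpos. apply: add_le => //; apply: add_le => //.
  have := (@le_big X nat (index_iota 0 n) (fun _ => true) (fun k => sroot k.+2 (dot (conj q) (mvec (mpow A k) p))) 0%N).
  rewrite mem_index_iota Hn mid_p => /(_ isT isT) H. exact: le_trans H TS3.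
have Q3 k : (k < n)%N -> sle (dot (conj q) (mvec (mpow A k) p)) (spow theta k.+2).
  move=> Hk; apply: le_sroot => //; apply: le_trans TS3.
  apply: (@le_big X nat _ (fun _ => true) (fun k => sroot k.+2 (dot (conj q) (mvec (mpow A k) p))) k) => //.
  by rewrite mem_index_iota.
have Q2 k : (k < n)%N -> sle (sadd (dot (conj q) (mvec (mpow A k) g)) (dot (conj h) (mvec (mpow A k) p))) (spow theta k.+1).
  move=> Hk; apply: le_sroot => //; apply: le_trans TS2.
  apply: (@le_big X nat _ (fun _ => true) (fun k => sroot k.+1 (sadd (dot (conj q) (mvec (mpow A k) g)) (dot (conj h) (mvec (mpow A k) p)))) k) => //.
  by rewrite mem_index_iota.
have Q1 k : (k < n)%N -> sle (dot (conj h) (mvec (mpow A k) g)) (spow theta k).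
  move=> Hk; case: k Hk => [|k] Hk; first by rewrite mid_g.
  apply: le_sroot => //; apply: le_trans TS1.
  apply: (@le_big X nat _ (fun _ => true) (fun k => sroot k (dot (conj h) (mvec (mpow A k) g))) k.+1) => //.
  by rewrite mem_index_iota.
set T := sinv theta.
set C := mscale T A.
have Hpow k : (0 < k)%N -> (k <= n)%N -> sle (mtr (mpow A k)) (spow theta k).
  move=> H1 H2; apply: le_sroot => //; apply: le_trans Tlam.
  apply: (@le_big X nat _ (fun _ => true) (fun k => sroot k (mtr (mpow A k))) k) => //.
  by rewrite mem_index_iota H1.
have Htr : forall k, (0 < k)%N -> (k <= n)%N -> sle (mtr (mpow C k)) sone.
  move=> k H1 H2; rewrite /mtr; apply: bigI_le => i; rewrite mpow_scale.
  rewrite -(spow_inv k Htheta); apply: le_mul2l. apply: le_trans (Hpow k H1 H2).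
  exact: (le_bigI (fun i => mpow A k i i) i).
have HW k i j : sle (mpow C k i j) (B i j) by exact: (mpow_le_star Htr k i j).
have B1 i : sle sone (B i i).
  apply: le_trans (HW 0%N i i). rewrite /= /mid eqxx; exact: le_refl.
have CB i l j : sle (smul (C i l) (B l j)) (B i j).
  rewrite /B /mstar mul_big; apply: bigI_le => k; apply: le_trans (HW k.+1 i j).
  rewrite mpowS /mmul; exact: (le_bigI (fun l => smul (C i l) (mpow C k l j)) l).
set dvec := vadd (vscale T (conj q)) (conj h).
set w := vecm dvec B.
have wnz j : w j != szero.
  apply: (@le_neq0 _ (conj h j)); last by rewrite ch; apply: inv_neq0.
  apply: le_trans (le_bigI (fun i => smul (dvec i) (B i j)) j).
  rewrite -{1}(mulx1 (conj h j)); apply: le_mul2; [exact: le_addr | exact: B1].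
have ubE j : ub j = sinv (w j) by apply: conjE.
have Hdx x i : regular x -> sle (smul (dvec i) (x i)) sone <->
   (sle (smul (sinv (q i)) (x i)) theta /\ sle (x i) (h i)).
  move=> Hx; rewrite /dvec /vadd /vscale mulDl add_leP -mulA cq ch !invl_le // !mul1x.
  done.
have back : forall u x, vle (vadd (vscale T p) g) u -> vle u ub -> x = mvec B u ->
    regular x -> [/\ vle g x, vle x h & F x = theta].
  move=> u x Hbu Hub Ex Hx.
  have ux i : sle (u i) (x i).
    rewrite Ex; apply: le_trans (mvec_term B u i i). rewrite -{1}(mul1x (u i)); apply: le_mul2r; exact: B1.
  have Hu i : sle (smul T (p i)) (u i) /\ sle (g i) (u i) by apply/add_leP; exact: Hbu.
  have Hcx i : sle (mvec C x i) (x i).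
    rewrite {2}Ex; apply: bigI_le => l. rewrite Ex /mvec mul_big; apply: bigI_le => j.
    rewrite mulA; apply: le_trans (le_mul2r _ (CB i l j)) _. exact: mvec_term.
  have HAx i : sle (mvec A x i) (smul theta (x i)).
    by rewrite mulC -(invl_le (a:=theta)) // -mvec_mscale; exact: Hcx.
  have Hp i : sle (p i) (smul theta (x i)).
    rewrite mulC -(invl_le (a:=theta)) //; apply: le_trans (ux i); exact: (proj1 (Hu i)).
  have Hd i : sle (smul (dvec i) (x i)) sone.
    rewrite Ex /mvec mul_big; apply: bigI_le => j. rewrite mulA.
    apply: le_trans (le_mul2r _ (le_bigI (fun i => smul (dvec i) (B i j)) i)) _.
    apply/(@le_inv_iff X (w j) (u j) (wnz j)); rewrite -ubE; exact: Hub.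
  have Hqh i := proj1 (Hdx x i Hx) (Hd i).
  have Fx : sle (F x) theta.
    apply/(Fle x theta Hx); split => // i; by case: (Hqh i).
  split => [i||]; first by apply: le_trans (ux i); exact: (proj2 (Hu i)).
    by move=> i; case: (Hqh i).
  apply: le_anti Fx _. apply: Part1 => // i; [apply: le_trans (ux i); exact: (proj2 (Hu i))|by case: (Hqh i)].
have fwd : forall x, regular x -> vle g x -> vle x h -> F x = theta ->
    exists u : vec X n, [/\ vle (vadd (vscale T p) g) u, vle u ub & x = mvec B u].
  move=> x Hx Hgx Hxh FE.
  case: (proj1 (Fle x theta Hx)); first by rewrite FE; exact: le_refl.
  move=> H1 H2 H3 _.
  have Hcx i : sle (mvec C x i) (smul sone (x i)).
    rewrite /C mvec_mscale mul1x (invl_le (a:=theta)) // mulC; exact: H1.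
  have HCk k i : sle (mvec (mpow C k) x i) (x i).
    by move: (mvec_pow_le k i Hcx); rewrite spow1 mul1x.
  have HBx : mvec B x = x.
    apply: functional_extensionality => i; apply: le_anti.
      apply: bigI_le => j; rewrite /B /mstar big_mulr; apply: bigI_le => k.
      apply: le_trans (HCk k i). exact: mvec_term.
    apply: le_trans (mvec_term B x i i). rewrite -{1}(mul1x (x i)); apply: le_mul2r; exact: B1.
  have Hd i : sle (smul (dvec i) (x i)) sone.
    by apply/(Hdx x i Hx); split; [exact: H3 | exact: Hxh].
  exists x; split; last by rewrite HBx.
  - move=> i; rewrite /vadd /vscale; apply: add_le; last exact: Hgx.
    rewrite /T (invl_le (a:=theta)) // mulC; exact: H2.
  - move=> j; rewrite ubE; apply/(@le_inv_iff X (w j) (x j) (wnz j)); rewrite /w /vecm big_mulr; apply: bigI_le => i.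
    rewrite -mulA; apply: le_trans (Hd i). apply: le_mul2l.
    rewrite -{2}HBx; exact: mvec_term.
have mul4 (a b c d : X) : smul (smul a b) (smul c d) = smul (smul a c) (smul b d).
  by rewrite -!mulA (mulCA b).
have key m (Z Y : X) : sle Y (spow theta m) -> sle Z Y -> sle (smul (spow T m) Z) sone.
  move=> H1 H2; rewrite -(spow_inv m Htheta); apply: le_mul2l; exact: le_trans H2 H1.
have term (u v : vec X n) k i j : sle (smul (smul (u i) (mpow A k i j)) (v j)) (dot u (mvec (mpow A k) v)).
  rewrite -mulA; apply: le_trans (dot_term _ _ i); apply: le_mul2l; exact: mvec_term.
have bub : vle (vadd (vscale T p) g) ub.
  move=> j; rewrite ubE; apply/(@le_inv_iff X (w j) _ (wnz j)); rewrite /w /vecm big_mulr; apply: bigI_le => i.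
  rewrite /B /mstar mul_big big_mulr; apply: bigI_le => k.
  have Hk := ltn_ord k.
  rewrite mpow_scale /dvec /vadd /vscale. set Tk := spow (sinv theta) k. set M := mpow A k i j.
  rewrite !mulDr; apply: (@add_le X); rewrite !mulDl; apply: (@add_le X).
  - have -> : smul (smul (smul T (conj q i)) (smul Tk M)) (smul T (p j)) =
              smul (smul T (smul T Tk)) (smul (smul (conj q i) M) (p j)).
      rewrite -!mulA; congr (smul T _).
      rewrite [smul M (smul T _)]mulCA [smul Tk (smul T _)]mulCA [smul (conj q i) (smul T _)]mulCA.
      congr (smul T _). by rewrite mulCA.
    exact: (key k.+2 _ _ (Q3 k Hk) (term _ _ _ _ _)).
  - have -> : smul (smul (conj h i) (smul Tk M)) (smul T (p j)) =
              smul (smul T Tk) (smul (smul (conj h i) M) (p j)).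
      rewrite -!mulA. rewrite [smul M (smul T _)]mulCA [smul Tk (smul T _)]mulCA [smul (conj h i) (smul T _)]mulCA.
      congr (smul T _). by rewrite mulCA.
    apply: (key k.+1 _ _ (Q2 k Hk)). apply: le_trans (le_addr _ _). exact: term.
  - have -> : smul (smul (smul T (conj q i)) (smul Tk M)) (g j) =
              smul (smul T Tk) (smul (smul (conj q i) M) (g j)).
      rewrite -!mulA; congr (smul T _). by rewrite mulCA.
    apply: (key k.+1 _ _ (Q2 k Hk)). apply: le_trans (le_addl _ _). exact: term.
  - have -> : smul (smul (conj h i) (smul Tk M)) (g j) =
              smul Tk (smul (smul (conj h i) M) (g j)).
      by rewrite -!mulA mulCA.
    exact: (key k _ _ (Q1 k Hk) (term _ _ _ _ _)).
split => //. split.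
  have Hreg : regular (mvec B ub).
    move=> i; apply: (@le_neq0 _ (ub i)); last by rewrite ubE; apply: inv_neq0.
    apply: le_trans (mvec_term B ub i i). rewrite -{1}(mul1x (ub i)); apply: le_mul2r; exact: B1.
  case: (back ub (mvec B ub) bub (fun i => le_refl _) erefl Hreg) => H1 H2 H3.
  by exists (mvec B ub).
move=> x Hx; split.
  by case=> H1 [H2 H3]; apply: fwd.
case=> u [H1 H2 H3]. case: (back u x H1 H2 H3 Hx) => *; by split.
Qed.
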